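(* For every integer $n>1$ there is a set $S$ of $n$ points in the plane $\mathbb{R}^2$ in convex position such that every Steiner tree $T$ on $S$ has dilation (with respect to $S$) at least $\frac{1}{\sin(\pi/n)}$, and $\frac{1}{\sin(\pi/n)} > \frac{n}{\pi}$.
   Context: A set of points is in convex position if all of them lie on the boundary of their convex hull. A Steiner tree on a finite set $S\subset\mathbb{R}^2$ is a tree $T$ whose vertex set is a finite subset of $\mathbb{R}^2$ containing $S$ (vertices not in $S$ are Steiner points; their number and positions are arbitrary). Each edge $(u,v)$ is realized as the straight segment $uv$ and has weight equal to the Euclidean distance $d(u,v)$; edges may cross or overlap. $d_T(u,v)$ denotes the length of the (unique) path in $T$ between $u$ and $v$. The dilation of $T$ with respect to $S$ is $\max_{u,v\in S,\,u\neq v} d_T(u,v)/d(u,v)$. *)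

(* Defs.v *)
From Stdlib Require Import Reals List.
Import ListNotations.
Open Scope R_scope.

Definition point : Type := (R * R)%type.

Definition dist (p q : point) : R :=
  sqrt ((fst p - fst q) ^ 2 + (snd p - snd q) ^ 2).

Fixpoint sum_list (l : list R) : R :=
  match l with [] => 0 | x :: l' => x + sum_list l' end.

Fixpoint wsum (ws : list R) (S : list point) : point :=
  match ws, S with
  | w :: ws', p :: S' =>
      let r := wsum ws' S' in (w * fst p + fst r, w * snd p + snd r)
  | _, _ => (0, 0)
  end.

Definition in_hull (S : list point) (p : point) : Prop :=
  exists ws : list R,
    length ws = length S /\ Forall (fun w => 0 <= w) ws /\
    sum_list ws = 1 /\ p = wsum ws S.

Definition in_hull_interior (S : list point) (p : point) : Prop :=
  exists eps : R, 0 < eps /\ forall q : point, dist p q < eps -> in_hull S q.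

Definition on_hull_boundary (S : list point) (p : point) : Prop :=
  in_hull S p /\ ~ in_hull_interior S p.

Definition convex_position (S : list point) : Prop :=
  forall p, In p S -> on_hull_boundary S p.

(* Geometric graph: vertex list V, edge list E (unordered pairs). *)
Definition adj (E : list (point * point)) (u v : point) : Prop :=
  In (u, v) E \/ In (v, u) E.

Fixpoint walk_ok (E : list (point * point)) (p : list point) : Prop :=
  match p with
  | x :: ((y :: _) as rest) => adj E x y /\ walk_ok E rest
  | _ => True
  end.

Definition simple_path (E : list (point * point)) (u v : point)
  (p : list point) : Prop :=
  NoDup p /\ walk_ok E p /\ head p = Some u /\ last p u = v /\ p <> [].

Fixpoint path_length (p : list point) : R :=
  match p with
  | x :: ((y :: _) as rest) => dist x y + path_length rest
  | _ => 0
  end.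

Definition well_formed_graph (V : list point) (E : list (point * point)) : Prop :=
  NoDup V /\
  forall e, In e E -> In (fst e) V /\ In (snd e) V /\ fst e <> snd e.

Definition connected (V : list point) (E : list (point * point)) : Prop :=
  forall u v, In u V -> In v V -> exists p, simple_path E u v p.

Definition has_cycle (E : list (point * point)) : Prop :=
  exists c : list point, (3 <= length c)%nat /\ NoDup c /\ walk_ok E c /\
    exists x y, head c = Some x /\ last c x = y /\ adj E y x.

Definition is_tree (V : list point) (E : list (point * point)) : Prop :=
  well_formed_graph V E /\ V <> [] /\ connected V E /\ ~ has_cycle E.

Definition steiner_tree (S V : list point) (E : list (point * point)) : Prop :=
  is_tree V E /\ incl S V.

(* Dilation of T = (V,E) w.r.t. S is at least c: some pair u <> v in S
   has d_T(u,v)/d(u,v) >= c, d_T being the length of the (unique) tree path. *)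
Definition dilation_at_least (S : list point) (E : list (point * point)) (c : R)
  : Prop :=
  exists u v, In u S /\ In v S /\ u <> v /\
    exists p, simple_path E u v p /\ path_length p / dist u v >= c.

(* Main.v *)
Require Import Defs.
From Stdlib Require Import Reals List.
Open Scope R_scope.
From Stdlib Require Import Lra Lia Classical.
Import ListNotations.

Lemma dist_sym a b : Defs.dist a b = Defs.dist b a.
Proof. unfold Defs.dist. f_equal. ring. Qed.

Lemma dist_refl a : Defs.dist a a = 0.
Proof. unfold Defs.dist. replace ((fst a - fst a) ^ 2 + (snd a - snd a) ^ 2) with 0 by ring. apply sqrt_0. Qed.

Lemma minkowski u1 u2 v1 v2 :
  sqrt ((u1+v1)^2 + (u2+v2)^2) <= sqrt (u1^2+u2^2) + sqrt (v1^2+v2^2).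
Proof.
  set (A := u1^2+u2^2). set (B := v1^2+v2^2).
  assert (HA : 0 <= A) by (unfold A; nra).
  assert (HB : 0 <= B) by (unfold B; nra).
  pose proof (sqrt_pos A). pose proof (sqrt_pos B).
  pose proof (sqrt_sqrt A HA). pose proof (sqrt_sqrt B HB).
  set (R0 := sqrt A + sqrt B).
  assert (HR : 0 <= R0) by (unfold R0; lra).
  rewrite <- (sqrt_square R0 HR).
  apply sqrt_le_1. apply Rplus_le_le_0_compat; apply pow2_ge_0. apply Rmult_le_pos; lra.
  assert (Hcs : (u1*v1+u2*v2)^2 <= A*B).
  { pose proof (pow2_ge_0 (u1*v2-u2*v1)). unfold A, B.
    replace ((u1 ^ 2 + u2 ^ 2) * (v1 ^ 2 + v2 ^ 2)) with ((u1*v1+u2*v2)^2 + (u1*v2-u2*v1)^2) by ring. lra. }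
  assert (Hm : u1*v1+u2*v2 <= sqrt A * sqrt B).
  { destruct (Rle_dec (u1*v1+u2*v2) 0). nra.
    assert (Hq : (sqrt A * sqrt B)^2 = A*B).
    { replace ((sqrt A * sqrt B)^2) with ((sqrt A * sqrt A) * (sqrt B * sqrt B)) by ring. congruence. }
    set (m := sqrt A * sqrt B) in *. assert (0 <= m) by (unfold m; nra).
    set (d := u1*v1+u2*v2) in *. nra. }
  unfold R0. unfold A, B in *. nra.
Qed.

Lemma dist_tri a b c : Defs.dist a c <= Defs.dist a b + Defs.dist b c.
Proof.
  unfold Defs.dist.
  replace (fst a - fst c) with ((fst a - fst b) + (fst b - fst c)) by ring.
  replace (snd a - snd c) with ((snd a - snd b) + (snd b - snd c)) by ring.
  apply minkowski.
Qed.

Lemma dist_ge_dot x p : fst p ^2 + snd p ^2 = 1 ->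
  1 - (fst x * fst p + snd x * snd p) <= Defs.dist x p.
Proof.
  intros Hp. unfold Defs.dist.
  set (B := 1 - (fst x * fst p + snd x * snd p)).
  destruct (Rle_dec B 0). pose proof (sqrt_pos ((fst x - fst p) ^ 2 + (snd x - snd p) ^ 2)). lra.
  assert (HB : 0 <= B) by lra.
  rewrite <- (sqrt_square B HB). apply sqrt_le_1. apply Rmult_le_pos; lra. apply Rplus_le_le_0_compat; apply pow2_ge_0.
  unfold B. 
  assert (E: 1 - (fst x * fst p + snd x * snd p) = (fst p - fst x) * fst p + (snd p - snd x) * snd p) by (rewrite <- Hp; ring).
  rewrite E.
  pose proof (pow2_ge_0 ((fst p - fst x) * snd p - (snd p - snd x) * fst p)).
  replace ((fst x - fst p) ^ 2 + (snd x - snd p) ^ 2) with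
   (((fst x - fst p) ^ 2 + (snd x - snd p) ^ 2) * (fst p ^2 + snd p ^2)) by (rewrite Hp; ring).
  replace (((fst x - fst p) ^ 2 + (snd x - snd p) ^ 2) * (fst p ^2 + snd p ^2)) with
   (((fst p - fst x) * fst p + (snd p - snd x) * snd p) * ((fst p - fst x) * fst p + (snd p - snd x) * snd p) + ((fst p - fst x) * snd p - (snd p - snd x) * fst p)^2) by ring.
  lra.
Qed.


Ltac lnorm := repeat (rewrite <- app_assoc || rewrite <- app_comm_cons); reflexivity.

Lemma walk_ok_app E l1 y l2 : walk_ok E (l1 ++ y :: l2) <-> walk_ok E (l1 ++ [y]) /\ walk_ok E (y :: l2).
Proof.
  induction l1 as [|a l1 IH]; simpl. tauto.
  destruct l1 as [|b l1]; simpl. tauto.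
  simpl in IH. rewrite IH. tauto.
Qed.

Section PS.
Variable f : point -> point -> R.

Fixpoint ps (l : list point) : R :=
  match l with x :: ((y :: _) as r) => f x y + ps r | _ => 0 end.

Lemma ps_app l1 y l2 : ps (l1 ++ y :: l2) = ps (l1 ++ [y]) + ps (y :: l2).
Proof.
  induction l1 as [|a l1 IH]; simpl. lra.
  destruct l1 as [|b l1]; simpl. lra.
  simpl in IH. rewrite IH. lra.
Qed.

Lemma walk_ok_snoc E l y : walk_ok E (l ++ [y]) -> walk_ok E l /\ (l = [] \/ adj E (last l y) y).
Proof.
  induction l as [|a l IH]; simpl. auto.
  destruct l as [|b l]; simpl. intros [H _]. auto.
  intros [H1 H2]. destruct (IH H2) as [H3 [H4|H4]]. discriminate.
  split. split; auto. right. exact H4.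
Qed.

Lemma not_NoDup_split (l : list point) : ~ NoDup l -> exists A a B C, l = A ++ a :: B ++ a :: C.
Proof.
  induction l as [|h l IH]; intros H. exfalso; apply H; constructor.
  destruct (classic (In h l)) as [Hi|Hi].
  - destruct (in_split _ _ Hi) as [l1 [l2 E]]. exists [], h, l1, l2. simpl. congruence.
  - assert (~ NoDup l) as Hn by (intro Hd; apply H; constructor; auto).
    destruct (IH Hn) as [A [a [B [C E]]]]. exists (h :: A), a, B, C. simpl. congruence.
Qed.

Hypothesis fanti : forall a b, f b a = - f a b.

Lemma rot_closed E x A' a R :
  walk_ok E (x :: A' ++ a :: R ++ [x]) ->
  walk_ok E (a :: R ++ x :: A' ++ [a]) /\
  ps (x :: A' ++ a :: R ++ [x]) = ps (a :: R ++ x :: A' ++ [a]).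
Proof.
  intros H.
  assert (H1 := proj1 (walk_ok_app E (x :: A') a (R ++ [x])) H).
  change (x :: A' ++ a :: R ++ [x]) with ((x :: A') ++ a :: R ++ [x]).
  change (a :: R ++ x :: A' ++ [a]) with ((a :: R) ++ x :: A' ++ [a]).
  rewrite (ps_app (x :: A')), (ps_app (a :: R)). split.
  - apply walk_ok_app. simpl app in *. tauto.
  - simpl app. lra.
Qed.

Lemma closed_zero E : ~ has_cycle E ->
  forall n x t, (length t <= n)%nat -> walk_ok E (x :: t ++ [x]) -> ps (x :: t ++ [x]) = 0.
Proof.
  intros Hnc n. induction n as [|n IH]; intros x t Hl Hw.
  - destruct t; [|simpl in Hl; lia]. simpl. pose proof (fanti x x). lra.
  - destruct (classic (NoDup (x :: t))) as [Hd|Hd].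
    + destruct t as [|y [|z t']].
      * simpl. pose proof (fanti x x). lra.
      * simpl. pose proof (fanti x y). lra.
      * exfalso. apply Hnc. exists (x :: y :: z :: t'). split. simpl; lia. split; auto.
        change (x :: (y :: z :: t') ++ [x]) with ((x :: y :: z :: t') ++ [x]) in Hw.
        destruct (walk_ok_snoc E _ _ Hw) as [Hw1 [Hw2|Hw2]]. discriminate.
        split; auto. exists x, (last (x :: y :: z :: t') x). split; auto.
    + destruct (not_NoDup_split _ Hd) as [A [a [B [C HE]]]].
      assert (Hrot : walk_ok E (a :: (B ++ a :: C ++ A) ++ [a]) /\
                     ps (x :: t ++ [x]) = ps (a :: (B ++ a :: C ++ A) ++ [a])).
      { destruct A as [|x' A'].
        - simpl in HE. injection HE as -> ->. rewrite app_nil_r. split; auto.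
        - simpl in HE. injection HE as <- ->.
          destruct (rot_closed E x A' a (B ++ a :: C)) as [R1 R2].
          + replace (x :: A' ++ a :: (B ++ a :: C) ++ [x]) with (x :: (A' ++ a :: B ++ a :: C) ++ [x])
              by lnorm. exact Hw.
          + replace (a :: (B ++ a :: C ++ x :: A') ++ [a]) with (a :: (B ++ a :: C) ++ x :: A' ++ [a])
              by lnorm.
            replace (x :: (A' ++ a :: B ++ a :: C) ++ [x]) with (x :: A' ++ a :: (B ++ a :: C) ++ [x])
              by lnorm.
            split; assumption. }
      destruct Hrot as [Hw' Hp]. rewrite Hp.
      assert (Hlen : length (x :: t) = (length A + length B + length C + 2)%nat).
      { rewrite HE. rewrite length_app. simpl. rewrite length_app. simpl. lia. }
      simpl in Hlen.
      replace (a :: (B ++ a :: C ++ A) ++ [a]) with ((a :: B) ++ a :: ((C ++ A) ++ [a])) in *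
        by lnorm.
      rewrite ps_app. apply walk_ok_app in Hw'. destruct Hw' as [W1 W2].
      change ((a :: B) ++ [a]) with (a :: B ++ [a]) in *.
      rewrite (IH a B), (IH a (C ++ A)); auto; try lra.
      rewrite length_app. lia. lia.
Qed.

End PS.


Definition Wk E (u v : point) (w : list point) :=
  walk_ok E w /\ (exists m, w = u :: m) /\ (exists l, w = l ++ [v]).

Lemma glue f E u v z w1 w2 : Wk E u v w1 -> Wk E v z w2 ->
  exists w, Wk E u z w /\ ps f w = ps f w1 + ps f w2.
Proof.
  intros [H1 [[m1 E1] [l1 F1]]] [H2 [[m2 E2] [l2 F2]]].
  subst w2. exists (l1 ++ v :: m2). split; [split; [|split]|].
  - apply (proj2 (walk_ok_app E l1 v m2)). rewrite <- F1. auto.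
  - destruct l1 as [|u' l1]; simpl in F1; rewrite E1 in F1.
    + injection F1 as -> ->. exists m2. reflexivity.
    + injection F1 as -> _. simpl. eauto.
  - exists (l1 ++ l2). rewrite F2. rewrite <- app_assoc. reflexivity.
  - rewrite ps_app. rewrite <- F1. reflexivity.
Qed.

Lemma closed_walk_zero f E u w : (forall a b, f b a = - f a b) -> ~ has_cycle E ->
  Wk E u u w -> ps f w = 0.
Proof.
  intros fa Hnc [H [[m E1] [l F1]]]. subst w.
  destruct m as [|y m']. reflexivity.
  destruct (exists_last (l := y :: m')) as [t [y' Ey]]. discriminate.
  rewrite Ey in *.
  assert (y' = u).
  { assert (Hl : last (u :: t ++ [y']) u = last (l ++ [u]) u) by (rewrite F1; reflexivity).
    rewrite last_last in Hl. change (u :: t ++ [y']) with ((u :: t) ++ [y']) in Hl.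
    rewrite last_last in Hl. exact Hl. }
  subst y'. apply (closed_zero f fa E Hnc (length t)); auto.
Qed.

Lemma simple_Wk E u v p : simple_path E u v p -> Wk E u v p.
Proof.
  intros [_ [Hw [Hh [Hl Hne]]]]. split; auto. split.
  - destruct p as [|a m]. congruence. simpl in Hh. injection Hh as ->. eauto.
  - destruct (exists_last Hne) as [l [y Ey]]. subst p. rewrite last_last in Hl. subst. eauto.
Qed.

Lemma last_def (y : point) m d d' : last (y :: m) d = last (y :: m) d'.
Proof. revert y. induction m as [|z m IH]; intros y. reflexivity. change (last (z :: m) d = last (z :: m) d'). apply IH. Qed.

Lemma path_len_bound : forall m h x, In x (h :: m) ->
  Defs.dist h x + Defs.dist x (last (h :: m) h) <= path_length (h :: m).
Proof.
  induction m as [|y m IH]; intros h x Hx.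
  - simpl in Hx. destruct Hx as [<-|[]]. simpl. rewrite dist_refl. lra.
  - change (path_length (h :: y :: m)) with (Defs.dist h y + path_length (y :: m)).
    change (last (h :: y :: m) h) with (last (y :: m) h). rewrite (last_def y m h y).
    destruct Hx as [<-|Hx].
    + rewrite dist_refl. pose proof (IH y y (or_introl eq_refl)). rewrite dist_refl in H.
      pose proof (dist_tri h y (last (y :: m) y)). lra.
    + pose proof (IH y x Hx). pose proof (dist_tri h y x). lra.
Qed.

Definition g (x : point) : R := if Rle_dec 0 (snd x) then 1 else 0.
Definition fX (a b : point) : R := (snd a * fst b - snd b * fst a) * (snd a - snd b).
Definition f (a b : point) : R :=
  if Req_EM_T (g a) (g b) then 0 else if Rlt_dec 0 (fX a b) then g b - g a else 0.
Definition G (s x : point) : R := if Rlt_dec 0 (fst s) then g x else 0.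
Definition dot (a b : point) := fst a * fst b + snd a * snd b.

Lemma f_anti a b : f b a = - f a b.
Proof.
  unfold f. replace (fX b a) with (fX a b) by (unfold fX; ring).
  destruct (Req_EM_T (g b) (g a)); destruct (Req_EM_T (g a) (g b)); try (exfalso; congruence).
  lra. destruct (Rlt_dec 0 (fX a b)); lra.
Qed.

Lemma fG s a b : 0 < dot a s -> 0 < dot b s -> f a b = G s b - G s a.
Proof.
  unfold dot. intros Ha Hb. unfold f, G, g, fX.
  destruct a as [a1 a2], b as [b1 b2], s as [s1 s2]; simpl in *.
  assert (Hid : a2 * (b1*s1+b2*s2) - b2 * (a1*s1+a2*s2) = s1 * (a2*b1 - b2*a1)) by ring.
  destruct (Rle_dec 0 a2) as [ha|ha]; destruct (Rle_dec 0 b2) as [hb|hb].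
  - destruct (Req_EM_T 1 1); [|lra]. destruct (Rlt_dec 0 s1); lra.
  - assert (K : 0 < s1 * (a2*b1 - b2*a1)) by nra.
    destruct (Req_EM_T 1 0); [lra|].
    destruct (Rlt_dec 0 s1) as [hs|hs].
    + assert (0 < a2*b1 - b2*a1) by nra.
      destruct (Rlt_dec 0 ((a2 * b1 - b2 * a1) * (a2 - b2))) as [|Hn]; [lra|]. exfalso; apply Hn; nra.
    + assert (a2*b1 - b2*a1 < 0) by nra.
      destruct (Rlt_dec 0 ((a2 * b1 - b2 * a1) * (a2 - b2))) as [Hn|]; [|lra]. exfalso; nra.
  - assert (K : s1 * (a2*b1 - b2*a1) < 0) by nra.
    destruct (Req_EM_T 0 1); [lra|].
    destruct (Rlt_dec 0 s1) as [hs|hs].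
    + assert (a2*b1 - b2*a1 < 0) by nra.
      destruct (Rlt_dec 0 ((a2 * b1 - b2 * a1) * (a2 - b2))) as [|Hn]; [lra|]. exfalso; apply Hn; nra.
    + assert (0 < a2*b1 - b2*a1) by nra.
      destruct (Rlt_dec 0 ((a2 * b1 - b2 * a1) * (a2 - b2))) as [Hn|]; [|lra]. exfalso; nra.
  - destruct (Req_EM_T 0 0); [|lra]. destruct (Rlt_dec 0 s1); lra.
Qed.

Lemma ps_G s : forall m h, (forall x, In x (h :: m) -> 0 < dot x s) ->
  ps f (h :: m) = G s (last (h :: m) h) - G s h.
Proof.
  induction m as [|y m IH]; intros h Hin.
  - simpl. lra.
  - change (ps f (h :: y :: m)) with (f h y + ps f (y :: m)).
    change (last (h :: y :: m) h) with (last (y :: m) h). rewrite (last_def y m h y).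
    rewrite IH by (intros x Hx; apply Hin; right; exact Hx).
    rewrite (fG s) by (apply Hin; simpl; auto). lra.
Qed.


Definition hh (n : nat) : R := 2 * PI / INR n.
Definition pt (n k : nat) : point := (cos (INR k * hh n), sin (INR k * hh n)).
Definition padd (a b : point) : point := (fst a + fst b, snd a + snd b).

Lemma sc1 x : cos x ^ 2 + sin x ^ 2 = 1.
Proof. pose proof (sin2_cos2 x). unfold Rsqr in H. simpl. lra. Qed.

Lemma hh_pos n : (2 <= n)%nat -> 0 < hh n /\ hh n <= PI.
Proof.
  intros Hn. unfold hh. assert (H2 : 2 <= INR n) by (apply (le_INR 2); lia).
  pose proof PI_RGT_0. split. apply Rdiv_lt_0_compat; lra.
  apply (Rmult_le_reg_r (INR n)). lra. unfold Rdiv. rewrite Rmult_assoc, Rinv_l by lra. nra.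
Qed.

Lemma hh_le3 n : (3 <= n)%nat -> hh n <= 2 * PI / 3.
Proof.
  intros Hn. unfold hh. assert (H2 : 3 <= INR n) by (assert (INR 3 <= INR n) by (apply le_INR; lia); simpl in H; lra).
  pose proof PI_RGT_0.
  apply (Rmult_le_reg_r (INR n)). lra. unfold Rdiv. rewrite Rmult_assoc, Rinv_l by lra. nra.
Qed.

Lemma hh_n n : (1 <= n)%nat -> INR n * hh n = 2 * PI.
Proof. intros Hn. unfold hh. assert (1 <= INR n) by (apply (le_INR 1); lia). field. lra. Qed.

Lemma pt_n n : (1 <= n)%nat -> pt n n = pt n 0.
Proof. intros Hn. unfold pt. rewrite hh_n by auto. simpl. rewrite Rmult_0_l, cos_2PI, sin_2PI, cos_0, sin_0. reflexivity. Qed.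

Lemma pt_unit n k : fst (pt n k) ^ 2 + snd (pt n k) ^ 2 = 1.
Proof. apply sc1. Qed.

Lemma pt_S n k : INR (S k) * hh n = INR k * hh n + hh n.
Proof. rewrite S_INR. ring. Qed.

Lemma sin_half n : (2 <= n)%nat -> 0 < sin (PI / INR n).
Proof.
  intros Hn. assert (H2 : 2 <= INR n) by (apply (le_INR 2); lia). pose proof PI_RGT_0.
  apply sin_gt_0. apply Rdiv_lt_0_compat; lra.
  apply (Rmult_lt_reg_r (INR n)). lra. unfold Rdiv. rewrite Rmult_assoc, Rinv_l by lra. nra.
Qed.

Lemma dist_consec n k : (2 <= n)%nat -> Defs.dist (pt n k) (pt n (S k)) = 2 * sin (PI / INR n).
Proof.
  intros Hn. unfold Defs.dist, pt. rewrite pt_S. cbn [fst snd].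
  set (a := INR k * hh n). set (h := hh n).
  rewrite cos_plus, sin_plus.
  assert (Hh : cos h = 1 - 2 * sin (PI / INR n) * sin (PI / INR n)).
  { rewrite <- cos_2a_sin. f_equal. unfold h, hh. field. assert (2 <= INR n) by (apply (le_INR 2); lia). lra. }
  pose proof (sc1 a). pose proof (sc1 h).
  set (σ := sin (PI / INR n)) in *.
  assert (E : (cos a - (cos a * cos h - sin a * sin h)) ^ 2 + (sin a - (sin a * cos h + cos a * sin h)) ^ 2
             = (cos a ^ 2 + sin a ^ 2) * ((1 - cos h)^2 + sin h ^ 2)) by ring.
  rewrite E, H. replace ((1 - cos h) ^ 2 + sin h ^ 2) with (1 - 2 * cos h + (cos h ^ 2 + sin h ^ 2)) by ring.
  rewrite H0, Hh. replace (1 * (1 - 2 * (1 - 2 * σ * σ) + 1)) with ((2 * σ) * (2 * σ)) by ring.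
  apply sqrt_square. pose proof (sin_half n Hn). fold σ in H1. lra.
Qed.

Lemma cos_sum2 x h : cos x + cos (x + h) = 2 * cos (x + h / 2) * cos (h / 2).
Proof.
  assert (K : forall c d, cos (c - d) + cos (c + d) = 2 * cos c * cos d).
  { intros. rewrite cos_minus, cos_plus. ring. }
  rewrite <- K. f_equal; f_equal; field.
Qed.

Lemma sign_fact n k : (3 <= n)%nat -> (k + 2 <= n)%nat ->
  G (padd (pt n k) (pt n (S k))) (pt n (S k)) = G (padd (pt n k) (pt n (S k))) (pt n k).
Proof.
  intros Hn Hk. unfold G, padd, pt, g. rewrite pt_S. cbn [fst snd].
  pose proof (hh_pos n ltac:(lia)) as [h0 hP]. pose proof (hh_le3 n Hn) as h3.
  set (h := hh n) in *. set (a := INR k * h).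
  assert (a0 : 0 <= a) by (unfold a; pose proof (pos_INR k); nra).
  assert (a2 : a + h <= 2 * PI - h).
  { unfold a. assert (INR k + 2 <= INR n) by (assert (INR (k+2) <= INR n) by (apply le_INR; lia); rewrite plus_INR in H; simpl in H; lra).
    pose proof (hh_n n ltac:(lia)). fold h in H0. nra. }
  pose proof PI_RGT_0.
  destruct (Rlt_dec 0 (cos a + cos (a + h))) as [Hc|Hc]; [|reflexivity].
  destruct (Rle_dec 0 (sin (a + h))) as [s1|s1]; destruct (Rle_dec 0 (sin a)) as [s0|s0]; try reflexivity; exfalso.
  - assert (PI < a) by (destruct (Rlt_dec PI a); auto; exfalso; apply s0; apply sin_ge_0; lra).
    assert (sin (a + h) < 0) by (apply sin_lt_0; lra). lra.
  - assert (a <= PI) by (destruct (Rle_dec a PI); auto; exfalso; assert (sin a < 0) by (apply sin_lt_0; lra); lra).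
    assert (PI < a + h) by (destruct (Rlt_dec PI (a+h)); auto; exfalso; apply s1; apply sin_ge_0; lra).
    set (b := a + h / 2).
    assert (Ecos : cos a + cos (a + h) = 2 * cos b * cos (h / 2)).
    { unfold b. apply cos_sum2. }
    assert (cos b < 0) by (apply cos_lt_0; unfold b; lra).
    assert (0 <= cos (h/2)) by (apply cos_ge_0; lra).
    nra.
Qed.

Lemma last_fact n : (3 <= n)%nat ->
  G (padd (pt n (n-1)) (pt n n)) (pt n n) - G (padd (pt n (n-1)) (pt n n)) (pt n (n-1)) = 1.
Proof.
  intros Hn. rewrite (pt_n n) by lia.
  pose proof (hh_pos n ltac:(lia)) as [h0 hP]. pose proof (hh_le3 n Hn) as h3.
  pose proof PI_RGT_0.
  assert (Ea : INR (n-1) * hh n = 2 * PI - hh n).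
  { rewrite minus_INR by lia. simpl INR. rewrite Rmult_minus_distr_r, hh_n by lia. ring. }
  unfold G, padd, pt, g. rewrite Ea. cbn [fst snd]. simpl INR. rewrite Rmult_0_l, cos_0, sin_0.
  set (h := hh n) in *.
  replace (cos (2 * PI - h)) with (cos h) by (rewrite cos_minus, cos_2PI, sin_2PI; ring).
  replace (sin (2 * PI - h)) with (- sin h) by (rewrite sin_minus, cos_2PI, sin_2PI; ring).
  assert (cos PI < cos h) by (apply cos_decreasing_1; lra).
  rewrite cos_PI in H0.
  assert (0 < sin h) by (apply sin_gt_0; lra).
  destruct (Rlt_dec 0 (cos h + 1)); [|lra].
  destruct (Rle_dec 0 0); [|lra]. destruct (Rle_dec 0 (- sin h)); lra.
Qed.


Lemma wsum_zero : forall (S : list point) m, wsum (repeat 0 m) S = (0, 0).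
Proof.
  induction S as [|p S IH]; intros m; destruct m; simpl; auto.
  rewrite IH. simpl. f_equal; ring.
Qed.

Lemma sum_repeat0 m : sum_list (repeat 0 m) = 0.
Proof. induction m; simpl; auto. rewrite IHm. ring. Qed.

Lemma in_hull_mem : forall S p, In p S -> in_hull S p.
Proof.
  induction S as [|q S IH]; intros p Hp. destruct Hp.
  destruct (classic (p = q)) as [->|Hne].
  - exists (1 :: repeat 0 (length S)). split. simpl. rewrite repeat_length. auto.
    split. constructor. lra. apply Forall_forall. intros x Hx. apply repeat_spec in Hx. lra.
    split. simpl. rewrite sum_repeat0. ring.
    simpl. rewrite wsum_zero. simpl. destruct q; simpl; f_equal; ring.
  - destruct Hp as [Hp|Hp]. congruence.
    destruct (IH p Hp) as [ws [H1 [H2 [H3 H4]]]].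
    exists (0 :: ws). split. simpl; auto. split. constructor; auto. lra.
    split. simpl. lra. simpl. rewrite H4. destruct (wsum ws S); simpl. f_equal; ring.
Qed.

Lemma hull_dot u : forall S ws, length ws = length S -> Forall (fun w => 0 <= w) ws ->
  (forall q, In q S -> dot q u <= 1) -> dot (wsum ws S) u <= sum_list ws.
Proof.
  induction S as [|q S IH]; intros ws Hl Hf Hb; destruct ws as [|w ws]; simpl in *; try lia.
  - unfold dot; simpl. lra.
  - inversion Hf; subst.
    pose proof (IH ws ltac:(lia) H2 (fun q' h => Hb q' (or_intror h))).
    pose proof (Hb q (or_introl eq_refl)).
    unfold dot in *. simpl. destruct (wsum ws S) as [x y]. simpl in *. nra.
Qed.

Lemma not_interior S p : (forall q, In q S -> dot q p <= 1) -> dot p p = 1 -> ~ in_hull_interior S p.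
Proof.
  intros Hb Hp [eps [He Hall]].
  set (q := ((1 + eps/2) * fst p, (1 + eps/2) * snd p)).
  assert (Hd : Defs.dist p q < eps).
  { unfold Defs.dist, q. cbn [fst snd].
    replace ((fst p - (1 + eps / 2) * fst p) ^ 2 + (snd p - (1 + eps / 2) * snd p) ^ 2)
      with ((eps/2) * (eps/2) * dot p p) by (unfold dot; ring).
    rewrite Hp, Rmult_1_r, sqrt_square; lra. }
  destruct (Hall q Hd) as [ws [H1 [H2 [H3 H4]]]].
  pose proof (hull_dot p S ws H1 H2 Hb). rewrite <- H4, H3 in H.
  unfold dot in H, Hp. unfold q in H. simpl in H. nra.
Qed.

Definition Spoly n := map (pt n) (seq 0 n).

Lemma pt_dot n j k : dot (pt n j) (pt n k) <= 1.
Proof.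
  unfold dot. pose proof (pt_unit n j). pose proof (pt_unit n k).
  pose proof (pow2_ge_0 (fst (pt n j) - fst (pt n k))). pose proof (pow2_ge_0 (snd (pt n j) - snd (pt n k))).
  nra.
Qed.

Lemma convex_poly n : convex_position (Spoly n).
Proof.
  intros p Hp. split. apply in_hull_mem; auto.
  unfold Spoly in Hp. apply in_map_iff in Hp. destruct Hp as [k [<- _]].
  apply not_interior.
  - intros q Hq. unfold Spoly in Hq. apply in_map_iff in Hq. destruct Hq as [j [<- _]]. apply pt_dot.
  - pose proof (pt_unit n k). unfold dot. nra.
Qed.

Lemma pt_inj n j k : (j < k < n)%nat -> pt n j <> pt n k.
Proof.
  intros Hjk He.
  assert (Hc : cos (INR k * hh n - INR j * hh n) = 1).
  { rewrite cos_minus. unfold pt in He. injection He as E1 E2. rewrite <- E1, <- E2.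
    pose proof (sc1 (INR j * hh n)). nra. }
  set (x := INR k * hh n - INR j * hh n) in *.
  pose proof (hh_pos n ltac:(lia)) as [h0 hP].
  assert (x0 : 0 < x).
  { unfold x. assert (INR j < INR k) by (apply lt_INR; lia). nra. }
  assert (x2 : x < 2 * PI).
  { unfold x. rewrite <- (hh_n n) by lia. assert (INR k < INR n) by (apply lt_INR; lia).
    pose proof (pos_INR j). nra. }
  assert (0 < sin (x / 2)) by (apply sin_gt_0; lra).
  replace x with (2 * (x/2)) in Hc by field. rewrite cos_2a_sin in Hc. nra.
Qed.

Lemma nodup_poly n : NoDup (Spoly n).
Proof.
  unfold Spoly. apply NoDup_map_NoDup_ForallPairs; [|apply seq_NoDup].
  intros j k Hj Hk He. apply in_seq in Hj, Hk.
  destruct (Nat.lt_trichotomy j k) as [H|[H|H]]; auto.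
  - exfalso. apply (pt_inj n j k); auto. lia.
  - exfalso. apply (pt_inj n k j); auto. lia.
Qed.

Lemma final_ineq n : (2 <= n)%nat -> 1 / sin (PI / INR n) > INR n / PI.
Proof.
  intros Hn. pose proof (sin_half n Hn). assert (2 <= INR n) by (apply (le_INR 2); lia).
  pose proof PI_RGT_0.
  assert (sin (PI / INR n) < PI / INR n) by (apply sin_lt_x; apply Rdiv_lt_0_compat; lra).
  set (s := sin (PI / INR n)) in *.
  replace (INR n / PI) with (1 / (PI / INR n)) by (field; lra).
  unfold Rdiv. rewrite !Rmult_1_l. apply Rinv_lt_contravar. nra. lra.
Qed.


Lemma Wk_last E u v m : Wk E u v (u :: m) -> last (u :: m) u = v.
Proof. intros [_ [_ [l Hl]]]. rewrite Hl. apply last_last. Qed.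

Lemma in_poly n k : (k <= n)%nat -> (1 <= n)%nat -> In (pt n k) (Spoly n).
Proof.
  intros Hk Hn. unfold Spoly. destruct (Nat.eq_dec k n) as [->|Hne].
  - rewrite pt_n by auto. apply in_map. apply in_seq. lia.
  - apply in_map. apply in_seq. lia.
Qed.

Lemma tree_part n : (2 <= n)%nat -> forall V E, steiner_tree (Spoly n) V E ->
  dilation_at_least (Spoly n) E (1 / sin (PI / INR n)).
Proof.
  intros Hn V E [[[Hnd Hwf] [Hne [Hconn Hnc]]] Hincl].
  apply NNPP; intro ND.
  pose proof (sin_half n Hn) as Hs.
  assert (Hpath : forall k, (k < n)%nat -> exists m, Wk E (pt n k) (pt n (S k)) (pt n k :: m) /\
     forall x, In x (pt n k :: m) -> 0 < dot x (padd (pt n k) (pt n (S k)))).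
  { intros k Hk.
    assert (Hu : In (pt n k) (Spoly n)) by (apply in_poly; lia).
    assert (Hv : In (pt n (S k)) (Spoly n)) by (apply in_poly; lia).
    destruct (Hconn _ _ (Hincl _ Hu) (Hincl _ Hv)) as [p Hp].
    pose proof (simple_Wk _ _ _ _ Hp) as HW.
    destruct HW as [HW1 [[m Hm] HW3]]. subst p. exists m.
    assert (HW : Wk E (pt n k) (pt n (S k)) (pt n k :: m)) by (split; eauto).
    split; auto.
    assert (Hd := dist_consec n k Hn).
    assert (Hlen : path_length (pt n k :: m) < 2).
    { destruct (Rlt_dec (path_length (pt n k :: m)) 2) as [|Hge]; auto. exfalso. apply ND.
      exists (pt n k), (pt n (S k)). split; auto. split; auto. split.
      { intro Heq. rewrite Heq, dist_refl in Hd. lra. }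
      exists (pt n k :: m). split; auto. rewrite Hd.
      set (σ := sin (PI / INR n)) in *.
      apply Rle_ge. unfold Rdiv. rewrite Rmult_1_l.
      replace (path_length (pt n k :: m) * / (2 * σ)) with ((path_length (pt n k :: m) / 2) * / σ) by (field; lra).
      rewrite <- (Rmult_1_l (/ σ)) at 1. apply Rmult_le_compat_r.
      left; apply Rinv_0_lt_compat; lra. lra. }
    intros x Hx. pose proof (path_len_bound m (pt n k) x Hx).
    rewrite (Wk_last _ _ _ _ HW) in H.
    pose proof (dist_ge_dot x (pt n k) (pt_unit n k)).
    pose proof (dist_ge_dot x (pt n (S k)) (pt_unit n (S k))).
    rewrite dist_sym in H0. unfold dot, padd in *. cbn [fst snd] in *. lra. }
  destruct (Nat.eq_dec n 2) as [->|Hn3].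
  - destruct (Hpath 0%nat ltac:(lia)) as [m [_ Hx]].
    specialize (Hx (pt 2 0) (or_introl eq_refl)).
    unfold dot, padd, pt, hh in Hx. cbn [fst snd] in Hx. simpl INR in Hx.
    replace (1 * (2 * PI / (1 + 1))) with PI in Hx by field.
    rewrite Rmult_0_l, cos_0, sin_0, cos_PI, sin_PI in Hx. lra.
  - assert (Hn3' : (3 <= n)%nat) by lia.
    assert (Hind : forall k, (k <= n - 1)%nat -> exists W, Wk E (pt n 0) (pt n k) W /\ ps f W = 0).
    { induction k as [|k IH]; intros Hk.
      - exists [pt n 0]. split. split. simpl; auto. split. eauto. exists []. reflexivity. reflexivity.
      - destruct (IH ltac:(lia)) as [W [HW HW0]].
        destruct (Hpath k ltac:(lia)) as [m [HP Hx]].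
        destruct (glue f E _ _ _ _ _ HW HP) as [W' [HW' Hps]].
        exists W'. split; auto. rewrite Hps, HW0.
        rewrite (ps_G _ m (pt n k) Hx). rewrite (Wk_last _ _ _ _ HP).
        rewrite sign_fact by lia. ring. }
    destruct (Hind (n-1)%nat ltac:(lia)) as [W [HW HW0]].
    destruct (Hpath (n-1)%nat ltac:(lia)) as [m [HP Hx]].
    replace (S (n-1)) with n in * by lia.
    destruct (glue f E _ _ _ _ _ HW HP) as [W' [HW' Hps]].
    rewrite (pt_n n) in HW' by lia.
    pose proof (closed_walk_zero f E _ _ f_anti Hnc HW').
    rewrite (ps_G _ m _ Hx), (Wk_last _ _ _ _ HP) in Hps.
    rewrite last_fact in Hps by lia. lra.
Qed.


Theorem theorem1 :
  forall n : nat, (1 < n)%nat ->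
    exists S : list point,
      length S = n /\ NoDup S /\ convex_position S /\
      (forall (V : list point) (E : list (point * point)),
          steiner_tree S V E ->
          dilation_at_least S E (1 / sin (PI / INR n))) /\
      1 / sin (PI / INR n) > INR n / PI.
Proof.
  intros n Hn. exists (Spoly n). split.
  - unfold Spoly. rewrite length_map, length_seq. reflexivity.
  - split. apply nodup_poly. split. apply convex_poly. split.
    + apply tree_part. lia.
    + apply final_ineq. lia.
Qed.
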